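(* Every Schnorr random set $A\subseteq\omega$ is canonically immune.
   Context: A canonical numbering of the finite sets is a surjective map $e\mapsto D_e$ from $\omega$ onto the finite subsets of $\omega$ such that $\{(e,x): x\in D_e\}$ is recursive and $e\mapsto|D_e|$ is recursive. A set $R\subseteq\omega$ is canonically immune if $R$ is infinite and there is a recursive function $h$ such that for every canonical numbering $(D_e)$ of the finite sets, for all but finitely many $e$, if $D_e\subseteq R$ then $|D_e|\le h(e)$. Schnorr randomness is with respect to the uniform (fair coin) measure on $2^\omega$, identifying sets with their characteristic sequences. *)

(* Defs.v *)
From Stdlib Require Import Arith List QArith.
Import ListNotations.
Local Open Scope nat_scope.

Inductive code : Type :=
| cZero : code
| cSucc : code
| cProj : nat -> code
| cComp : code -> list code -> code
| cPrimRec : code -> code -> code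
| cMu : code -> code.

Inductive eval : code -> list nat -> nat -> Prop :=
| ev_zero : forall a, eval cZero a 0
| ev_succ : forall a, eval cSucc a (S (hd 0 a))
| ev_proj : forall i a, eval (cProj i) a (nth i a 0)
| ev_comp : forall f gs a bs y,
    evals gs a bs -> eval f bs y -> eval (cComp f gs) a y
| ev_pr0 : forall f g a y, eval f a y -> eval (cPrimRec f g) (0 :: a) y
| ev_prS : forall f g n a r y,
    eval (cPrimRec f g) (n :: a) r -> eval g (n :: r :: a) y ->
    eval (cPrimRec f g) (S n :: a) y
| ev_mu : forall f a n,
    eval f (n :: a) 0 ->
    (forall m, m < n -> exists k, eval f (m :: a) (S k)) ->
    eval (cMu f) a n
with evals : list code -> list nat -> list nat -> Prop :=
| evs_nil : forall a, evals [] a []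
| evs_cons : forall g gs a b bs,
    eval g a b -> evals gs a bs -> evals (g :: gs) a (b :: bs).

Definition recursive1 (f : nat -> nat) : Prop :=
  exists c, forall x, eval c [x] (f x).
Definition recursive2 (f : nat -> nat -> nat) : Prop :=
  exists c, forall x y, eval c [x; y] (f x y).
Definition recursive_rel (R : nat -> nat -> bool) : Prop :=
  recursive2 (fun x y => if R x y then 1 else 0).

(* Binary strings and their (bijective) coding by natural numbers.      *)
Definition bstring := list bool.

Fixpoint code_str (s : bstring) : nat :=
  match s with
  | [] => 0
  | b :: s' => 2 * code_str s' + (if b then 2 else 1)
  end.

Definition prefix (A : nat -> bool) (m : nat) : bstring := map A (seq 0 m).

Definition unif_ce (U : nat -> bstring -> Prop) : Prop :=
  exists c, forall n s, U n s <-> exists y, eval c [n; code_str s] y.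

Fixpoint all_strings (L : nat) : list bstring :=
  match L with
  | 0 => [[]]
  | S L' => map (cons false) (all_strings L') ++ map (cons true) (all_strings L')
  end.

Fixpoint is_prefix (s t : bstring) : bool :=
  match s, t with
  | [], _ => true
  | b :: s', c :: t' => Bool.eqb b c && is_prefix s' t'
  | _ :: _, [] => false
  end.

(* uniform measure of the union of the cylinders [s], s in F (F finite) *)
Definition mu_fin (F : list bstring) : Q := (
  let L := fold_right (fun s m => Nat.max (length s) m) 0%nat F in
  inject_Z (Z.of_nat (length (filter (fun t => existsb (fun s => is_prefix s t) F)
                                     (all_strings L))))
  / inject_Z (2 ^ Z.of_nat L))%Q.

Definition finite_sub (F : list bstring) (V : bstring -> Prop) : Prop :=
  forall s, In s F -> V s.

(* mu([V]) <= q, where [V] is the open class generated by V;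
   mu([V]) = sup { mu_fin F : F finite subset of V } *)
Definition mu_le (V : bstring -> Prop) (q : Q) : Prop :=
  forall F, finite_sub F V -> (mu_fin F <= q)%Q.

Definition pow2inv (n : nat) : Q := (1 / inject_Z (2 ^ Z.of_nat n))%Q.

(* Schnorr test: uniformly c.e. sequence of Sigma^0_1 classes [U_n] with
   mu([U_n]) <= 2^-n and mu([U_n]) a computable real uniformly in n:
   there is a recursive g with |mu([U_n]) - g(n,k)/2^k| <= 2^-k. *)
Definition SchnorrTest (U : nat -> bstring -> Prop) : Prop :=
  unif_ce U /\
  (forall n, mu_le (U n) (pow2inv n)) /\
  (exists g, recursive2 g /\
     forall n k,
       mu_le (U n) (inject_Z (Z.of_nat (g n k)) * pow2inv k + pow2inv k)%Q /\
       exists F, finite_sub F (U n) /\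
         (inject_Z (Z.of_nat (g n k)) * pow2inv k - pow2inv k <= mu_fin F)%Q).

(* A passes the test iff A is not in the intersection of the [U_n] *)
Definition SchnorrRandom (A : nat -> bool) : Prop :=
  forall U, SchnorrTest U -> exists n, forall m, ~ U n (prefix A m).

(* Canonical numberings of the finite sets.  D e is (the characteristic
   function of) D_e. *)
Definition canonical_numbering (D : nat -> nat -> bool) : Prop :=
  (exists card, recursive1 card /\
     forall e, exists l, NoDup l /\ length l = card e /\
       forall x, D e x = true <-> In x l) /\
  recursive_rel D /\
  (forall l : list nat, exists e, forall x, D e x = true <-> In x l).

Definition set_infinite (R : nat -> bool) : Prop :=
  forall n, exists m, n <= m /\ R m = true.

Definition canonically_immune (R : nat -> bool) : Prop :=
  set_infinite R /\
  exists h, recursive1 h /\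
    forall D, canonical_numbering D ->
      exists N, forall e, N <= e ->
        (forall x, D e x = true -> R x = true) ->
        forall l, NoDup l -> (forall x, D e x = true <-> In x l) ->
          length l <= h e.

(* Main.v *)
Require Import Defs.
From Stdlib Require Import Arith List QArith Lia Bool ZArith ConstructiveEpsilon Classical.
Import ListNotations.
Local Open Scope nat_scope.

Fixpoint csize (c : code) : nat :=
  match c with
  | cComp f gs => S (csize f + fold_right (fun g s => csize g + s) 0 gs)
  | cPrimRec f g => S (csize f + csize g)
  | cMu f => S (csize f)
  | _ => 1
  end.

Definition detc (c : code) := forall a y y', eval c a y -> eval c a y' -> y = y'.

Lemma evals_det : forall gs, (forall g, In g gs -> detc g) ->
  forall a bs bs', evals gs a bs -> evals gs a bs' -> bs = bs'.
Proof.
  induction gs as [|g gs IH]; intros Hd a bs bs' H1 H2.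
  - inversion H1; inversion H2; subst; auto.
  - inversion H1 as [|g1 gs1 a1 b1 bs1 Hb1 Hbs1]; subst.
    inversion H2 as [|g2 gs2 a2 b2 bs2 Hb2 Hbs2]; subst.
    f_equal.
    + apply (Hd g (or_introl eq_refl) a); auto.
    + apply IH with a; auto. intros; apply Hd; simpl; auto.
Qed.

Lemma pr_det : forall f g, detc f -> detc g -> forall n a y y',
  eval (cPrimRec f g) (n :: a) y -> eval (cPrimRec f g) (n :: a) y' -> y = y'.
Proof.
  intros f g Hf Hg n. induction n; intros a y y' H1 H2;
  inversion H1; inversion H2; subst.
  - apply (Hf a); auto.
  - assert (r = r0) by (apply (IHn a); auto). subst. apply (Hg (n :: r0 :: a)); auto.
Qed.

Lemma eval_det_aux : forall k c, csize c < k -> detc c.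
Proof.
  induction k; intros c Hc; [lia|].
  destruct c; intros a y y' H1 H2.
  - inversion H1; inversion H2; subst; auto.
  - inversion H1; inversion H2; subst; auto.
  - inversion H1; inversion H2; subst; auto.
  - inversion H1 as [| | |f1 gs1 a1 bs1 y1 Hs1 Hf1| | |]; subst.
    inversion H2 as [| | |f2 gs2 a2 bs2 y2 Hs2 Hf2| | |]; subst.
    assert (Hl : forall g, In g l -> detc g).
    { intros g Hg. apply IHk. simpl in Hc.
      clear -Hc Hg. induction l; simpl in *; [contradiction|].
      destruct Hg; subst; [lia|]. apply IHl; auto; lia. }
    assert (Hcd : detc c) by (apply IHk; simpl in Hc; lia).
    try (assert (bs1 = bs2) by (apply (evals_det l Hl a bs1 bs2 Hs1 Hs2)); subst).
    eapply Hcd; eauto.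
  - assert (detc c1) by (apply IHk; simpl in Hc; lia).
    assert (detc c2) by (apply IHk; simpl in Hc; lia).
    destruct a as [|n a]; [inversion H1|].
    apply (pr_det c1 c2 H H0 n a); auto.
  - assert (Hf : detc c) by (apply IHk; simpl in Hc; lia).
    inversion H1 as [| | | | | |f1 a1 n1 E1 L1]; subst.
    inversion H2 as [| | | | | |f2 a2 n2 E2 L2]; subst.
    destruct (lt_eq_lt_dec y y') as [[Hl|He]|Hl]; auto.
    + destruct (L2 y Hl) as [k0 Hk]. specialize (Hf _ _ _ E1 Hk). discriminate.
    + destruct (L1 y' Hl) as [k0 Hk]. specialize (Hf _ _ _ E2 Hk). discriminate.
Qed.

Lemma eval_det : forall c, detc c.
Proof. intro c. apply (eval_det_aux (S (csize c))). lia. Qed.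

Notation "a ## i" := (nth i a 0) (at level 1, format "a ## i").

Definition comp (c : code) (F : list nat -> nat) := forall a, eval c a (F a).
Record cf := mkcf { cc : code; cfn : list nat -> nat; cok : comp cc cfn }.

Definition cext (f : cf) (h : list nat -> nat) (H : forall a, cfn f a = h a) : cf.
Proof. refine (mkcf (cc f) h _). intro a; rewrite <- H; apply cok. Defined.

Lemma evals_map gs a : evals (map cc gs) a (map (fun g => cfn g a) gs).
Proof. induction gs; simpl; constructor; auto. apply cok. Qed.

Definition ccomp (f : cf) (gs : list cf) : cf :=
  mkcf (cComp (cc f) (map cc gs)) (fun a => cfn f (map (fun g => cfn g a) gs))
    (fun a => ev_comp _ _ _ _ _ (evals_map gs a) (cok f _)).

Fixpoint prf (F G : list nat -> nat) (n : nat) (a : list nat) : nat :=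
  match n with 0 => F a | S m => G (m :: prf F G m a :: a) end.

Lemma eval_prf f g : forall n a, eval (cPrimRec (cc f) (cc g)) (n :: a) (prf (cfn f) (cfn g) n a).
Proof. induction n; simpl; intros. constructor; apply cok. econstructor; [apply IHn | apply cok]. Qed.

Definition cprec (f g x : cf) (ys : list cf) : cf.
Proof.
  refine (mkcf (cComp (cPrimRec (cc f) (cc g)) (cc x :: map cc ys))
       (fun a => prf (cfn f) (cfn g) (cfn x a) (map (fun y => cfn y a) ys)) _).
  intro a. econstructor. constructor. apply cok. apply evals_map. apply eval_prf.
Defined.

Definition cZ : cf := mkcf cZero (fun _ => 0) (fun a => ev_zero a).
Definition cS0 : cf := mkcf cSucc (fun a => S (hd 0 a)) (fun a => ev_succ a).
Definition cS : cf.
Proof. refine (cext cS0 (fun a => S (a##0)) _). intro a; destruct a; reflexivity. Defined.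
Definition cP (i : nat) : cf := mkcf (cProj i) (fun a => a##i) (fun a => ev_proj i a).

Fixpoint cK (k : nat) : cf :=
  match k with 0 => cZ | S k' => ccomp cS [cK k'] end.
Lemma cK_val k a : cfn (cK k) a = k.
Proof. induction k; simpl; auto. Qed.

Definition cAdd : cf.
Proof.
  refine (cext (cprec (cP 0) (ccomp cS [cP 1]) (cP 0) [cP 1]) (fun a => a##0 + a##1) _).
  intro a; simpl. generalize (a##0); induction n; simpl; auto.
Defined.

Definition cMul : cf.
Proof.
  refine (cext (cprec cZ (ccomp cAdd [cP 1; cP 2]) (cP 0) [cP 1]) (fun a => a##0 * a##1) _).
  intro a; simpl. generalize (a##0); induction n; simpl; auto. rewrite IHn. lia.
Defined.

Definition cPred : cf.
Proof.
  refine (cext (cprec cZ (cP 0) (cP 0) []) (fun a => pred (a##0)) _).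
  intro a; simpl. destruct (a##0); reflexivity.
Defined.

Definition cSub : cf.
Proof.
  refine (cext (cprec (cP 0) (ccomp cPred [cP 1]) (cP 1) [cP 0]) (fun a => a##0 - a##1) _).
  intro a; simpl. generalize (a##1); induction n; simpl; [lia|]. rewrite IHn. lia.
Defined.

Definition cIfz : cf.
Proof.
  refine (cext (cprec (cP 0) (cP 3) (cP 0) [cP 1; cP 2])
     (fun a => match a##0 with 0 => a##1 | S _ => a##2 end) _).
  intro a; simpl. destruct (a##0); reflexivity.
Defined.

Definition cLe : cf.
Proof.
  refine (cext (ccomp cIfz [ccomp cSub [cP 0; cP 1]; cK 1; cK 0])
     (fun a => if a##0 <=? a##1 then 1 else 0) _).
  intro a; simpl.
  destruct (Nat.leb_spec (a##0) (a##1)); destruct (a##0 - a##1) eqn:E; auto; lia.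
Defined.

Definition cEq : cf.
Proof.
  refine (cext (ccomp cMul [ccomp cLe [cP 0; cP 1]; ccomp cLe [cP 1; cP 0]])
     (fun a => if a##0 =? a##1 then 1 else 0) _).
  intro a; simpl.
  destruct (Nat.leb_spec (a##0) (a##1)); destruct (Nat.leb_spec (a##1) (a##0));
  destruct (Nat.eqb_spec (a##0) (a##1)); auto; lia.
Defined.

Definition cPow2 : cf.
Proof.
  refine (cext (cprec (cK 1) (ccomp cAdd [cP 1; cP 1]) (cP 0) []) (fun a => 2 ^ (a##0)) _).
  intro a; simpl. generalize (a##0); induction n; simpl; auto. rewrite IHn. lia.
Defined.

Fixpoint sumf (n : nat) (f : nat -> nat) : nat :=
  match n with 0 => 0 | S m => sumf m f + f m end.

Lemma map_nth_seq (ps : list nat) : map (fun j => nth j ps 0) (seq 0 (length ps)) = ps.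
Proof.
  induction ps; simpl; auto. f_equal. rewrite <- seq_shift, map_map. simpl. auto.
Qed.

Definition cSum (P x : cf) (ys : list cf) : cf.
Proof.
  refine (cext (cprec cZ (ccomp cAdd [cP 1; ccomp P (cP 0 :: map (fun j => cP (S (S j))) (seq 0 (length ys)))])
     x ys)
     (fun a => sumf (cfn x a) (fun y => cfn P (y :: map (fun g => cfn g a) ys))) _).
  intro a. simpl. generalize (cfn x a). induction n; simpl; auto. rewrite IHn. f_equal.
  f_equal. f_equal. rewrite map_map. simpl.
  rewrite <- (length_map (fun g => cfn g a) ys) at 1. apply map_nth_seq.
Defined.

Fixpoint iterf (f : nat -> nat) (n x : nat) : nat :=
  match n with 0 => x | S m => f (iterf f m x) end.

Definition cIter (T : cf) : cf.
Proof.
  refine (cext (cprec (cP 0) (ccomp T [cP 1]) (cP 0) [cP 1])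
     (fun a => iterf (fun v => cfn T [v]) (a##0) (a##1)) _).
  intro a; simpl. generalize (a##0); induction n; simpl; auto. rewrite IHn; auto.
Defined.

Arguments Nat.modulo : simpl never.
Arguments Nat.div : simpl never.

Lemma sumf_ext n f g : (forall y, y < n -> f y = g y) -> sumf n f = sumf n g.
Proof. induction n; simpl; intros; auto. rewrite IHn, H; auto. Qed.

Definition divc (c d : nat) := sumf c (fun y => if (y + 1) * d <=? c then 1 else 0).

Lemma divc_spec c d : 0 < d -> divc c d = c / d.
Proof.
  intro Hd. unfold divc.
  assert (H : forall n, sumf n (fun y => if (y + 1) * d <=? c then 1 else 0) = Nat.min n (c / d)).
  { pose proof (Nat.div_mod c d) as Hm. pose proof (Nat.mod_upper_bound c d) as Hu.
    assert (Hu' : c mod d < d) by (apply Hu; lia). clear Hu.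
    assert (Hm' : c = d * (c/d) + c mod d) by (apply Hm; lia). clear Hm.
    remember (c / d) as q. remember (c mod d) as r. clear Heqq Heqr.
    induction n; [reflexivity|]. cbn [sumf]. rewrite IHn.
    destruct (Nat.leb_spec ((n+1)*d) c).
    - destruct (le_lt_dec (n+1) q); [lia|].
      assert (d * (q+1) <= d * (n+1)) by (apply Nat.mul_le_mono_l; lia). nia.
    - destruct (le_lt_dec q n); [lia|].
      assert (d * (n+1) <= d * q) by (apply Nat.mul_le_mono_l; lia). nia. }
  rewrite H. assert (c / d <= c) by (apply Nat.Div0.div_le_upper_bound; nia). lia.
Qed.

Definition cDiv : cf.
Proof.
  refine (cext (cSum (ccomp cLe [ccomp cMul [ccomp cS [cP 0]; cP 2]; cP 1]) (cP 0) [cP 0; cP 1])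
    (fun a => divc (a##0) (a##1)) _).
  intro a. simpl. unfold divc. apply sumf_ext. intros y _. replace (y+1) with (S y) by lia. reflexivity.
Defined.

Definition tlf (x : nat) := pred x / 2.
Definition hbf (x : nat) := match x with 0 => 0 | S _ => if x mod 2 =? 0 then 1 else 0 end.
Definition lenf (x : nat) := sumf x (fun j => match iterf tlf j x with 0 => 0 | S _ => 1 end).

Definition cTl : cf.
Proof.
  refine (cext (ccomp cDiv [ccomp cPred [cP 0]; cK 2]) (fun a => tlf (a##0)) _).
  intro a. simpl. rewrite divc_spec; auto.
Defined.

Definition cMod2 : cf.
Proof.
  refine (cext (ccomp cSub [cP 0; ccomp cMul [cK 2; ccomp cDiv [cP 0; cK 2]]]) (fun a => a##0 mod 2) _).
  intro a. simpl. rewrite divc_spec by lia. rewrite Nat.Div0.mod_eq. reflexivity.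
Defined.

Definition cHb : cf.
Proof.
  refine (cext (ccomp cIfz [cP 0; cK 0; ccomp cEq [ccomp cMod2 [cP 0]; cK 0]]) (fun a => hbf (a##0)) _).
  intro a. simpl. unfold hbf. destruct (a##0); reflexivity.
Defined.

Definition cBit : cf.
Proof.
  refine (cext (ccomp cHb [ccomp (cIter cTl) [cP 1; cP 0]]) (fun a => hbf (iterf tlf (a##1) (a##0))) _).
  intro a. reflexivity.
Defined.

Definition cLen : cf.
Proof.
  refine (cext (cSum (ccomp cIfz [ccomp (cIter cTl) [cP 0; cP 1]; cK 0; cK 1]) (cP 0) [cP 0])
     (fun a => lenf (a##0)) _).
  intro a. reflexivity.
Defined.

Lemma tlf_code l : tlf (code_str l) = code_str (tl l).
Proof.
  unfold tlf. destruct l as [|b l]; cbn [code_str tl]; [reflexivity|].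
  rewrite <- Nat.div2_div. destruct b.
  - replace (pred (2 * code_str l + 2)) with (S (2 * code_str l)) by lia.
    apply Nat.div2_succ_double.
  - replace (pred (2 * code_str l + 1)) with (2 * code_str l) by lia.
    apply Nat.div2_double.
Qed.

Lemma skipn_S_tl : forall (s : bstring) j, skipn (S j) s = tl (skipn j s).
Proof. induction s as [|a s IH]; intros [|j]; try reflexivity. change (skipn (S j) s = tl (skipn j s)). apply IH. Qed.

Lemma iter_code s j : iterf tlf j (code_str s) = code_str (skipn j s).
Proof.
  induction j; [reflexivity|]. cbn [iterf]. rewrite IHj, tlf_code, skipn_S_tl. reflexivity.
Qed.

Lemma hbf_code l : hbf (code_str l) = match l with [] => 0 | b :: _ => if b then 1 else 0 end.
Proof.
  destruct l as [|b l]; [reflexivity|]. cbn [code_str].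
  unfold hbf. destruct b.
  - assert (E : (2 * code_str l + 2) mod 2 = 0).
    { replace (2 * code_str l + 2) with ((code_str l + 1) * 2) by lia. apply Nat.Div0.mod_mul. }
    rewrite E. destruct (2 * code_str l + 2) eqn:Z; [lia|reflexivity].
  - assert (E : (2 * code_str l + 1) mod 2 = 1).
    { replace (2 * code_str l + 1) with (1 + code_str l * 2) by lia. apply Nat.Div0.mod_add. }
    rewrite E. destruct (2 * code_str l + 1) eqn:Z; [lia|reflexivity].
Qed.

Lemma nth_skipn_hd : forall (s : bstring) j,
  nth j s false = match skipn j s with [] => false | b :: _ => b end.
Proof. induction s as [|a s IH]; intros [|j]; try reflexivity. apply IH. Qed.

Lemma bit_code s j : hbf (iterf tlf j (code_str s)) = if nth j s false then 1 else 0.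
Proof.
  rewrite iter_code, hbf_code, nth_skipn_hd. destruct (skipn j s); auto.
Qed.

Lemma code_len : forall s : bstring, length s <= code_str s.
Proof. induction s; simpl; [lia|]. destruct a; lia. Qed.

Lemma code_zero : forall s : bstring, code_str s = 0 <-> s = [].
Proof. destruct s; simpl; split; intro H; auto; try discriminate. destruct b; lia. Qed.

Lemma sumf_lt m L : sumf m (fun j => if j <? L then 1 else 0) = Nat.min m L.
Proof.
  induction m; [reflexivity|]. cbn [sumf]. rewrite IHm.
  destruct (Nat.ltb_spec m L); lia.
Qed.

Lemma len_code s : lenf (code_str s) = length s.
Proof.
  unfold lenf. rewrite (sumf_ext _ _ (fun j => if j <? length s then 1 else 0)).
  - rewrite sumf_lt. pose proof (code_len s). lia.
  - intros j _. rewrite iter_code.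
    destruct (code_str (skipn j s)) eqn:E.
    + apply code_zero in E. apply (f_equal (@length bool)) in E. rewrite length_skipn in E.
      simpl in E. destruct (Nat.ltb_spec j (length s)); lia.
    + assert (skipn j s <> []) by (intro H; apply code_zero in H; congruence).
      destruct (Nat.ltb_spec j (length s)); auto.
      exfalso. apply H. apply skipn_all2. lia.
Qed.

Record pieces := {
  actb : nat -> nat -> bool; Mfun : nat -> nat -> nat;
  maskb : nat -> nat -> nat -> bool; valb : nat -> nat -> nat -> bool;
  c_act : cf; c_M : cf; c_mask : cf; c_val : cf;
  h_act : forall n i, cfn c_act [n; i] = if actb n i then 1 else 0;
  h_M : forall n i, cfn c_M [n; i] = Mfun n i;
  h_mask : forall n i j, cfn c_mask [n; i; j] = if maskb n i j then 1 else 0;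
  h_val : forall n i j, cfn c_val [n; i; j] = if valb n i j then 1 else 0;
  h_cnt : forall n i, actb n i = true ->
     n + i + 1 <= sumf (Mfun n i) (fun j => if maskb n i j then 1 else 0) }.

Definition satb (p : pieces) n i (s : bstring) : bool :=
  actb p n i && (Mfun p n i <=? length s) &&
  forallb (fun j => implb (maskb p n i j) (Bool.eqb (nth j s false) (valb p n i j)))
    (seq 0 (Mfun p n i)).

Definition satc (p : pieces) : cf :=
  let Mv := ccomp (c_M p) [cP 1; cP 0] in
  let ok := ccomp cIfz [ccomp (c_mask p) [cP 2; cP 1; cP 0]; cK 1;
              ccomp cEq [ccomp cBit [cP 3; cP 0]; ccomp (c_val p) [cP 2; cP 1; cP 0]]] in
  ccomp cMul [ccomp (c_act p) [cP 1; cP 0];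
    ccomp cMul [ccomp cLe [Mv; ccomp cLen [cP 2]];
                ccomp cEq [cSum ok Mv [cP 0; cP 1; cP 2]; Mv]]].

Lemma sumf_le1 m f : (forall j, j < m -> f j <= 1) -> sumf m f <= m.
Proof.
  induction m; simpl; intros H; auto.
  assert (sumf m f <= m) by (apply IHm; intros; apply H; lia).
  assert (f m <= 1) by (apply H; lia). lia.
Qed.

Lemma sumf_all m (P : nat -> bool) :
  (sumf m (fun j => if P j then 1 else 0) =? m) = forallb P (seq 0 m).
Proof.
  induction m; [reflexivity|]. cbn [sumf]. rewrite seq_S, forallb_app.
  cbn [forallb]. rewrite andb_true_r, <- IHm.
  assert (H : sumf m (fun j => if P j then 1 else 0) <= m) by (apply sumf_le1; intros x _; destruct (P x); auto).
  revert H. generalize (sumf m (fun j => if P j then 1 else 0)). intros T H.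
  change (0 + m) with m. destruct (P m).
  - destruct (Nat.eqb_spec T m); destruct (Nat.eqb_spec (T + 1) (S m)); simpl; auto; lia.
  - destruct (Nat.eqb_spec T m); destruct (Nat.eqb_spec (T + 0) (S m)); simpl; auto; lia.
Qed.

Lemma satc_code p i n s :
  cfn (satc p) [i; n; code_str s] = if satb p n i s then 1 else 0.
Proof.
  unfold satc, satb. cbn [cfn ccomp map cSum cext nth].
  cbn [cfn ccomp map cSum cext nth cP cMul cLe cLen cEq cIfz cBit cK cS cZ]. rewrite h_act, h_M, len_code.
  rewrite (sumf_ext _ _ (fun j => if implb (maskb p n i j) (Bool.eqb (nth j s false) (valb p n i j)) then 1 else 0)).
  - rewrite sumf_all.
    destruct (actb p n i); destruct (Nat.leb (Mfun p n i) (length s));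
    destruct (forallb _ _); reflexivity.
  - intros j _. rewrite h_mask, h_val.
    rewrite bit_code. destruct (maskb p n i j); [|reflexivity].
    destruct (nth j s false), (valb p n i j); reflexivity.
Qed.

Definition cntL (L : nat) (P : bstring -> bool) : nat := length (filter P (all_strings L)).

Lemma filter_map_len {A B} (P : B -> bool) (f : A -> B) l :
  length (filter P (map f l)) = length (filter (fun x => P (f x)) l).
Proof. induction l; simpl; auto. destruct (P (f a)); simpl; auto. Qed.

Lemma cntL_S L P : cntL (S L) P = cntL L (fun t => P (false :: t)) + cntL L (fun t => P (true :: t)).
Proof. unfold cntL; simpl. rewrite filter_app, length_app, !filter_map_len. reflexivity. Qed.

Lemma cntL_0 P : cntL 0 P = if P [] then 1 else 0.
Proof. unfold cntL; simpl. destruct (P []); reflexivity. Qed.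

Lemma all_strings_len : forall L t, In t (all_strings L) -> length t = L.
Proof.
  induction L; simpl; intros t H.
  - destruct H as [<-|[]]; reflexivity.
  - apply in_app_or in H. destruct H as [H|H]; apply in_map_iff in H;
    destruct H as [u [<- Hu]]; simpl; f_equal; auto.
Qed.

Lemma all_strings_length : forall L, length (all_strings L) = 2 ^ L.
Proof. induction L; [reflexivity|]. cbn [all_strings]. rewrite length_app, !length_map, Nat.pow_succ_r'. unfold bstring in *. lia. Qed.

Lemma cntL_snoc : forall L P, cntL (S L) P =
  cntL L (fun t => P (t ++ [false])) + cntL L (fun t => P (t ++ [true])).
Proof.
  induction L; intros P.
  - rewrite cntL_S, !cntL_0. simpl. reflexivity.
  - rewrite (cntL_S (S L) P), (IHL (fun t => P (false :: t))), (IHL (fun t => P (true :: t))), (cntL_S L (fun t => P (t ++ [false]))), (cntL_S L (fun t => P (t ++ [true]))). simpl. lia.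
Qed.

Lemma filter_mono {A} (P Q : A -> bool) l :
  (forall x, In x l -> P x = true -> Q x = true) ->
  length (filter P l) <= length (filter Q l).
Proof.
  induction l; simpl; intros H; auto.
  destruct (P a) eqn:E.
  - rewrite (H a (or_introl eq_refl) E). simpl. apply le_n_S, IHl; auto.
  - destruct (Q a); simpl; [apply le_S|]; apply IHl; auto.
Qed.

Lemma cntL_mono L P Q : (forall t, length t = L -> P t = true -> Q t = true) ->
  cntL L P <= cntL L Q.
Proof. intros H. apply filter_mono. intros x Hx. apply H. apply all_strings_len; auto. Qed.

Lemma cntL_ext L P Q : (forall t, length t = L -> P t = Q t) -> cntL L P = cntL L Q.
Proof.
  intros H. apply Nat.le_antisymm; apply cntL_mono; intros t Ht E; rewrite H in *; auto.
Qed.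

Lemma filter_or {A} (P Q : A -> bool) l :
  length (filter (fun x => P x || Q x) l) <= length (filter P l) + length (filter Q l).
Proof. induction l; simpl; auto. destruct (P a), (Q a); simpl; lia. Qed.

Lemma cntL_false L : cntL L (fun _ => false) = 0.
Proof. unfold cntL. induction (all_strings L); simpl; auto. Qed.

Lemma cntL_andb L b P : cntL L (fun t => b && P t) = if b then cntL L P else 0.
Proof. destruct b; simpl. reflexivity. apply cntL_false. Qed.

Lemma cntL_exists L (S : nat -> bstring -> bool) I :
  cntL L (fun t => existsb (fun i => S i t) I) <= list_sum (map (fun i => cntL L (S i)) I).
Proof.
  induction I; simpl.
  - rewrite cntL_false. lia.
  - etransitivity; [apply filter_or|]. fold (cntL L (S a)).
    fold (cntL L (fun t => existsb (fun i => S i t) I)). lia.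
Qed.

Lemma cntL_le L P : cntL L P <= 2 ^ L.
Proof. unfold cntL. rewrite <- all_strings_length. apply filter_length_le. Qed.

Fixpoint cokb (c : nat -> option bool) (t : bstring) : bool :=
  match t with
  | [] => true
  | b :: t' => (match c 0 with None => true | Some v => Bool.eqb b v end) && cokb (fun j => c (S j)) t'
  end.

Definition ncons (L : nat) (c : nat -> option bool) :=
  sumf L (fun j => match c j with None => 0 | Some _ => 1 end).

Lemma sumf_shift : forall L f, sumf (S L) f = f 0 + sumf L (fun j => f (S j)).
Proof. induction L; intros f; [simpl; lia|]. cbn [sumf] in *. rewrite IHL. simpl. lia. Qed.


Lemma cok_count : forall L c, cntL L (cokb c) * 2 ^ (ncons L c) = 2 ^ L.
Proof.
  induction L; intros c.
  - rewrite cntL_0. reflexivity.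
  - rewrite cntL_S. unfold ncons. rewrite sumf_shift. fold (ncons L (fun j => c (S j))).
    simpl cokb. rewrite !cntL_andb. specialize (IHL (fun j => c (S j))).
    destruct (c 0) as [v|].
    + destruct v; simpl; rewrite Nat.add_0_r; lia.
    + simpl. lia.
Qed.

Lemma cokb_intro : forall t c,
  (forall j v, j < length t -> c j = Some v -> nth j t false = v) -> cokb c t = true.
Proof.
  induction t as [|b t IH]; intros c H; simpl; auto.
  apply andb_true_intro; split.
  - destruct (c 0) eqn:E; auto. specialize (H 0 b0 ltac:(simpl; lia) E). simpl in H. rewrite H. apply eqb_reflx.
  - apply IH. intros j v Hj Hc. apply (H (S j) v); simpl; auto. lia.
Qed.

Lemma sumf_trunc M (b : nat -> bool) : forall L,
  sumf L (fun j => if (j <? M) && b j then 1 else 0) = sumf (Nat.min L M) (fun j => if b j then 1 else 0).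
Proof.
  induction L; [reflexivity|]. cbn [sumf]. rewrite IHL.
  destruct (Nat.ltb_spec L M).
  - replace (Nat.min (S L) M) with (S (Nat.min L M)) by lia. cbn [sumf].
    replace (Nat.min L M) with L by lia. reflexivity.
  - replace (Nat.min (S L) M) with (Nat.min L M) by lia. simpl. lia.
Qed.

Lemma piece_count (p : pieces) n i L :
  cntL L (satb p n i) * 2 ^ (n + i + 1) <= 2 ^ L.
Proof.
  destruct (actb p n i) eqn:Ea.
  2:{ rewrite (cntL_ext L _ (fun _ => false)); [rewrite cntL_false; simpl; lia|].
      intros t _. unfold satb. rewrite Ea. reflexivity. }
  destruct (le_lt_dec (Mfun p n i) L) as [HM|HM].
  2:{ rewrite (cntL_ext L _ (fun _ => false)); [rewrite cntL_false; simpl; lia|].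
      intros t Ht. unfold satb. destruct (Nat.leb_spec (Mfun p n i) (length t)); [lia|].
      rewrite andb_false_r. reflexivity. }
  set (c := fun j => if (j <? Mfun p n i) && maskb p n i j then Some (valb p n i j) else None).
  assert (H1 : cntL L (satb p n i) <= cntL L (cokb c)).
  { apply cntL_mono. intros t Ht Hs. apply cokb_intro. intros j v Hj Hc.
    unfold c in Hc. destruct (Nat.ltb_spec j (Mfun p n i)); [|discriminate].
    destruct (maskb p n i j) eqn:Em; [|discriminate]. injection Hc as <-.
    unfold satb in Hs. apply andb_prop in Hs as [_ Hs].
    rewrite forallb_forall in Hs. specialize (Hs j ltac:(apply in_seq; lia)).
    rewrite Em in Hs. simpl in Hs. apply eqb_prop in Hs. auto. }
  assert (H2 : ncons L c = sumf (Mfun p n i) (fun j => if maskb p n i j then 1 else 0)).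
  { unfold ncons, c. transitivity (sumf L (fun j => if (j <? Mfun p n i) && maskb p n i j then 1 else 0)).
    - apply sumf_ext. intros j _. destruct ((j <? Mfun p n i) && maskb p n i j); reflexivity.
    - rewrite sumf_trunc. replace (Nat.min L (Mfun p n i)) with (Mfun p n i) by lia. reflexivity. }
  pose proof (h_cnt p n i Ea) as H3. pose proof (cok_count L c) as H4.
  rewrite H2 in H4.
  assert (2 ^ (n + i + 1) <= 2 ^ sumf (Mfun p n i) (fun j => if maskb p n i j then 1 else 0))
    by (apply Nat.pow_le_mono_r; lia).
  rewrite <- H4. apply Nat.mul_le_mono; auto.
Qed.

Lemma tail_sum n L (c : nat -> nat) : forall d k,
  (forall i, k <= i < k + d -> c i * 2 ^ (n + i + 1) <= 2 ^ L) ->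
  list_sum (map c (seq k d)) * 2 ^ (n + k) <= 2 ^ L.
Proof.
  induction d; intros k H; simpl; [lia|].
  specialize (IHd (S k) ltac:(intros; apply H; lia)).
  specialize (H k ltac:(lia)).
  replace (n + S k) with (S (n + k)) in IHd by lia.
  replace (n + k + 1) with (S (n + k)) in H by lia.
  rewrite Nat.pow_succ_r' in IHd, H. nia.
Qed.

Lemma ext_up L P : (forall t b, length t = L -> P t = true -> P (t ++ [b]) = true) ->
  2 * cntL L P <= cntL (S L) P.
Proof.
  intros H. rewrite cntL_snoc.
  assert (cntL L P <= cntL L (fun t => P (t ++ [false]))) by (apply cntL_mono; auto).
  assert (cntL L P <= cntL L (fun t => P (t ++ [true]))) by (apply cntL_mono; auto). lia.
Qed.

Lemma ext_eq L P : (forall t b, length t = L -> P (t ++ [b]) = P t) ->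
  cntL (S L) P = 2 * cntL L P.
Proof.
  intros H. rewrite cntL_snoc.
  assert (cntL L (fun t : bstring => P (t ++ [false])) = cntL L P) by (apply cntL_ext; auto).
  assert (cntL L (fun t : bstring => P (t ++ [true])) = cntL L P) by (apply cntL_ext; auto). lia.
Qed.

Lemma cntL_cmp P L0 L L' :
  (forall t b, P t = true -> P (t ++ [b]) = true) ->
  (forall t b, L0 <= length t -> P (t ++ [b]) = P t) -> L0 <= L' ->
  cntL L P * 2 ^ L' <= cntL L' P * 2 ^ L.
Proof.
  intros Hup Heq HL.
  assert (U : forall L d, cntL L P * 2 ^ d <= cntL (L + d) P).
  { intros L1 d; induction d. rewrite Nat.add_0_r; simpl; lia.
    replace (L1 + S d) with (S (L1 + d)) by lia.
    assert (2 * cntL (L1 + d) P <= cntL (S (L1 + d)) P) by (apply ext_up; auto).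
    rewrite Nat.pow_succ_r'. nia. }
  assert (E : forall L d, L0 <= L -> cntL (L + d) P = cntL L P * 2 ^ d).
  { intros L1 d H1; induction d. rewrite Nat.add_0_r; simpl; lia.
    replace (L1 + S d) with (S (L1 + d)) by lia.
    rewrite ext_eq. rewrite IHd, Nat.pow_succ_r'. lia. intros; apply Heq; lia. }
  destruct (le_lt_dec L L').
  - replace L' with (L + (L' - L)) by lia. rewrite Nat.pow_add_r.
    specialize (U L (L' - L)). nia.
  - replace L with (L' + (L - L')) by lia. rewrite E by auto. rewrite Nat.pow_add_r. lia.
Qed.

Definition Pk (k : nat) : positive := Pos.of_nat (2 ^ k).
Definition fr (a k : nat) : Q := Z.of_nat a # Pk k.

Lemma Pk_Z k : Zpos (Pk k) = Z.of_nat (2 ^ k).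
Proof.
  unfold Pk. rewrite <- positive_nat_Z. rewrite Nat2Pos.id; auto.
  apply Nat.pow_nonzero; lia.
Qed.

Lemma p2Z k : (2 ^ Z.of_nat k)%Z = Zpos (Pk k).
Proof. rewrite Pk_Z, Nat2Z.inj_pow. reflexivity. Qed.

Lemma fr_le a p b q : (fr a p <= fr b q)%Q <-> a * 2 ^ q <= b * 2 ^ p.
Proof.
  unfold fr, Qle. simpl. rewrite !Pk_Z, <- !Nat2Z.inj_mul. lia.
Qed.

Lemma pow2inv_fr k : pow2inv k == fr 1 k.
Proof. unfold pow2inv. rewrite p2Z. unfold fr, Qeq. simpl. lia. Qed.

Lemma up_fr a k : (inject_Z (Z.of_nat a) * pow2inv k + pow2inv k == fr (a + 1) k)%Q.
Proof.
  unfold pow2inv. rewrite p2Z. unfold fr, Qeq. simpl.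
  rewrite !Pos2Z.inj_mul, Nat2Z.inj_add. ring.
Qed.

Lemma lo_fr a k : 1 <= a -> (inject_Z (Z.of_nat a) * pow2inv k - pow2inv k == fr (a - 1) k)%Q.
Proof.
  intros H. unfold pow2inv. rewrite p2Z. unfold fr, Qeq. simpl.
  rewrite !Pos2Z.inj_mul, Nat2Z.inj_sub by lia. rewrite <- (Pos2Z.opp_pos (Pk k)). simpl Z.of_nat. ring.
Qed.

Definition maxlen (F : list bstring) := fold_right (fun s m => Nat.max (length s) m) 0 F.

Lemma mu_fin_fr F : mu_fin F == fr (cntL (maxlen F) (fun t => existsb (fun s => is_prefix s t) F)) (maxlen F).
Proof.
  unfold mu_fin. fold (maxlen F). rewrite p2Z. unfold fr. rewrite Qmake_Qdiv. reflexivity.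
Qed.

Definition Utest (p : pieces) (n : nat) (s : bstring) : Prop := exists i, satb p n i s = true.

Lemma forallb_ext_in {A} (f g : A -> bool) l : (forall x, In x l -> f x = g x) -> forallb f l = forallb g l.
Proof. induction l; simpl; intros H; auto. rewrite H, IHl; auto. Qed.

Lemma satb_app p n i t u : satb p n i t = true -> satb p n i (t ++ u) = true.
Proof.
  unfold satb. intros H. apply andb_prop in H as [H H3]. apply andb_prop in H as [H1 H2].
  apply Nat.leb_le in H2. rewrite H1. rewrite length_app.
  assert (E : Mfun p n i <=? length t + length u = true) by (apply Nat.leb_le; lia). rewrite E. simpl.
  rewrite forallb_forall in *. intros j Hj. specialize (H3 j Hj). apply in_seq in Hj.
  rewrite app_nth1 by lia. auto.
Qed.

Lemma satb_det p n i t b : Mfun p n i <= length t -> satb p n i (t ++ [b]) = satb p n i t.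
Proof.
  intros H. unfold satb. rewrite length_app.
  assert (E1 : Mfun p n i <=? length t + length [b] = true) by (apply Nat.leb_le; lia).
  assert (E2 : Mfun p n i <=? length t = true) by (apply Nat.leb_le; lia).
  rewrite E1, E2. f_equal. apply forallb_ext_in. intros j Hj. apply in_seq in Hj.
  rewrite app_nth1 by lia. reflexivity.
Qed.

Definition Ek p n k (t : bstring) := existsb (fun i => satb p n i t) (seq 0 k).
Definition Ssum p n k := sumf k (fun i => Mfun p n i).
Definition Ck p n k := cntL (Ssum p n k + k) (Ek p n k).
Definition gfun p n k := Ck p n k / 2 ^ (Ssum p n k) + 1.

Lemma M_le_sum p n k i : i < k -> Mfun p n i <= Ssum p n k.
Proof.
  unfold Ssum. induction k; intros H; [lia|]. cbn [sumf].
  destruct (Nat.eq_dec i k); subst; [lia|]. specialize (IHk ltac:(lia)). lia.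
Qed.

Lemma Ek_up p n k t b : Ek p n k t = true -> Ek p n k (t ++ [b]) = true.
Proof.
  unfold Ek. intros H. apply existsb_exists in H as [i [Hi Hs]].
  apply existsb_exists. exists i. split; auto. apply satb_app; auto.
Qed.

Lemma existsb_ext_in {A} (f g : A -> bool) l : (forall x, In x l -> f x = g x) -> existsb f l = existsb g l.
Proof. induction l; simpl; intros H; auto. rewrite H, IHl; auto. Qed.

Lemma Ek_det p n k t b : Ssum p n k <= length t -> Ek p n k (t ++ [b]) = Ek p n k t.
Proof.
  intros H. unfold Ek. apply existsb_ext_in. intros i Hi. apply in_seq in Hi.
  apply satb_det. pose proof (M_le_sum p n k i ltac:(lia)). lia.
Qed.

Lemma is_prefix_app : forall s t, is_prefix s t = true -> exists u, t = s ++ u.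
Proof.
  induction s as [|a s IH]; intros t H; simpl in *.
  - exists t; auto.
  - destruct t as [|b t]; [discriminate|]. apply andb_prop in H as [H1 H2].
    apply eqb_prop in H1; subst. destruct (IH t H2) as [u ->]. exists u; auto.
Qed.

Lemma is_prefix_refl : forall s, is_prefix s s = true.
Proof. induction s; simpl; auto. rewrite eqb_reflx; auto. Qed.

Lemma is_prefix_eq s t : is_prefix s t = true -> length s = length t -> s = t.
Proof.
  intros H E. destruct (is_prefix_app s t H) as [u ->]. rewrite length_app in E.
  destruct u; simpl in *; [rewrite app_nil_r; auto | lia].
Qed.

Lemma witness_bound p n F : finite_sub F (Utest p n) ->
  exists B, forall s, In s F -> exists i, i < B /\ satb p n i s = true.
Proof.
  induction F as [|s F IH]; intros H.
  - exists 0. intros s [].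
  - destruct IH as [B HB]. { intros x Hx. apply H; simpl; auto. }
    destruct (H s (or_introl eq_refl)) as [i Hi].
    exists (Nat.max B (S i)). intros x [<-|Hx].
    + exists i; split; auto; lia.
    + destruct (HB x Hx) as [j [Hj Hs]]. exists j; split; auto; lia.
Qed.

Lemma cnt_F_le p n F B : (forall s, In s F -> exists i, i < B /\ satb p n i s = true) ->
  cntL (maxlen F) (fun t => existsb (fun s => is_prefix s t) F) <= cntL (maxlen F) (Ek p n B).
Proof.
  intros HB. apply cntL_mono. intros t _ Ht. apply existsb_exists in Ht as [s [Hs Hp]].
  destruct (HB s Hs) as [i [Hi Hsat]]. destruct (is_prefix_app s t Hp) as [u ->].
  unfold Ek. apply existsb_exists. exists i. split. apply in_seq; lia. apply satb_app; auto.
Qed.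

Lemma Ek_split p n k d t : Ek p n (k + d) t = Ek p n k t || existsb (fun i => satb p n i t) (seq k d).
Proof. unfold Ek. rewrite seq_app, existsb_app. reflexivity. Qed.

Lemma mu_bound p n : mu_le (Utest p n) (pow2inv n).
Proof.
  intros F HF. rewrite mu_fin_fr, pow2inv_fr. apply fr_le.
  destruct (witness_bound p n F HF) as [B HB].
  pose proof (cnt_F_le p n F B HB) as H1.
  set (L := maxlen F) in *.
  pose proof (cntL_exists L (satb p n) (seq 0 B)) as H2. fold (Ek p n B) in H2.
  pose proof (tail_sum n L (fun i => cntL L (satb p n i)) B 0
      (fun i _ => piece_count p n i L)) as H3.
  rewrite Nat.add_0_r in H3. nia.
Qed.

Lemma upper_bound p n k : mu_le (Utest p n) (fr (gfun p n k + 1) k).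
Proof.
  intros F HF. rewrite mu_fin_fr. apply fr_le.
  destruct (witness_bound p n F HF) as [B0 HB0].
  set (B := Nat.max B0 k).
  assert (HB : forall s, In s F -> exists i, i < B /\ satb p n i s = true).
  { intros s Hs. destruct (HB0 s Hs) as [i [Hi Hsat]]. exists i; split; auto. unfold B; lia. }
  pose proof (cnt_F_le p n F B HB) as H1.
  set (L := maxlen F) in *.
  set (d := B - k).
  assert (EB : B = k + d) by (unfold d, B; lia).
  assert (H2 : cntL L (Ek p n B) <= cntL L (Ek p n k) +
       list_sum (map (fun i => cntL L (satb p n i)) (seq k d))).
  { rewrite EB. etransitivity.
    - unfold cntL. rewrite (filter_ext _ (fun t => Ek p n k t || existsb (fun i => satb p n i t) (seq k d)))
        by (intros; apply Ek_split). apply filter_or.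
    - fold (cntL L (Ek p n k)). pose proof (cntL_exists L (satb p n) (seq k d)). unfold cntL in *. lia. }
  pose proof (tail_sum n L (fun i => cntL L (satb p n i)) d k
      (fun i _ => piece_count p n i L)) as H3.
  set (T := list_sum (map (fun i => cntL L (satb p n i)) (seq k d))) in *.
  set (S := Ssum p n k).
  pose proof (cntL_cmp (Ek p n k) S L (S + k) (fun t b H => Ek_up p n k t b H)
     (fun t b H => Ek_det p n k t b H) ltac:(lia)) as H4.
  set (X := cntL L (Ek p n k)) in *.
  unfold gfun. fold S. fold (Ck p n k) in *. unfold Ck in H4. fold S in H4.
  set (C := cntL (S + k) (Ek p n k)) in *. unfold Ck. fold S. fold C.
  assert (HS : 0 < 2 ^ S) by (apply Nat.neq_0_lt_0, Nat.pow_nonzero; lia).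
  assert (HC : C < (C / 2 ^ S + 1) * 2 ^ S).
  { pose proof (Nat.div_mod C (2 ^ S) ltac:(lia)). pose proof (Nat.mod_upper_bound C (2^S) ltac:(lia)). nia. }
  rewrite Nat.pow_add_r in H4.
  assert (H5 : X * 2 ^ k * 2 ^ S < (C / 2 ^ S + 1) * 2 ^ L * 2 ^ S).
  { assert (X * 2 ^ k * 2 ^ S = X * (2 ^ S * 2 ^ k)) by ring.
    assert ((C / 2 ^ S + 1) * 2 ^ L * 2 ^ S = ((C / 2 ^ S + 1) * 2 ^ S) * 2 ^ L) by ring.
    assert (0 < 2 ^ L) by (apply Nat.neq_0_lt_0, Nat.pow_nonzero; lia). nia. }
  apply Nat.mul_lt_mono_pos_r in H5; auto.
  assert (H6 : T * 2 ^ k <= T * 2 ^ (n + k)) by (apply Nat.mul_le_mono_l, Nat.pow_le_mono_r; lia).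
  nia.
Qed.

Lemma maxlen_const F L : F <> [] -> (forall s, In s F -> length s = L) -> maxlen F = L.
Proof.
  induction F as [|s F IH]; intros Hne H; [congruence|]. simpl.
  destruct F as [|s' F'].
  - simpl. rewrite (H s); simpl; auto. lia.
  - fold (maxlen (s' :: F')). rewrite IH; [| congruence | intros; apply H; simpl; auto].
    rewrite (H s); simpl; auto. lia.
Qed.

Lemma all_strings_complete : forall t L, length t = L -> In t (all_strings L).
Proof.
  induction t as [|b t IH]; intros L H; subst; simpl; auto.
  apply in_or_app. destruct b; [right|left]; apply in_map; auto.
Qed.

Lemma lower_bound p n k : exists F, finite_sub F (Utest p n) /\
   (fr (gfun p n k - 1) k <= mu_fin F)%Q.
Proof.
  set (S := Ssum p n k). set (L := S + k).
  exists (filter (Ek p n k) (all_strings L)). split.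
  - intros s Hs. apply filter_In in Hs as [_ Hs]. unfold Ek in Hs.
    apply existsb_exists in Hs as [i [_ Hi]]. exists i; auto.
  - rewrite mu_fin_fr.
    set (F := filter (Ek p n k) (all_strings L)).
    assert (HC : cntL (maxlen F) (fun t => existsb (fun s => is_prefix s t) F) = Ck p n k
                 /\ (F = [] \/ maxlen F = L)).
    { destruct F as [|s0 F0] eqn:EF.
      - split; [|left; auto]. simpl. rewrite cntL_false. unfold Ck. fold S.
        unfold cntL. fold L. fold F. rewrite EF. reflexivity.
      - assert (Hlen : forall s, In s F -> length s = L).
        { intros s Hs. apply filter_In in Hs as [Hs _]. apply all_strings_len; auto. }
        rewrite <- EF. assert (ML : maxlen F = L) by (apply maxlen_const; auto; rewrite EF; congruence).
        split; [|right; auto]. rewrite ML. unfold Ck. fold S. fold L.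
        apply cntL_ext. intros t Ht.
        destruct (Ek p n k t) eqn:E.
        + apply existsb_exists. exists t. split; [|apply is_prefix_refl].
          unfold F. apply filter_In. split; auto.
          apply all_strings_complete; auto.
        + destruct (existsb (fun s => is_prefix s t) F) eqn:E2; auto.
          apply existsb_exists in E2 as [s [Hs Hp]].
          rewrite (is_prefix_eq s t Hp) in Hs. apply filter_In in Hs as [_ Hs]. congruence.
          rewrite Hlen, Ht; auto. }
    destruct HC as [HC HL]. rewrite HC. apply fr_le.
    unfold gfun. fold S. rewrite Nat.add_sub.
    assert (C1 : Ck p n k / 2 ^ S * 2 ^ S <= Ck p n k).
    { rewrite Nat.mul_comm. apply Nat.Div0.mul_div_le. }
    destruct HL as [HF|HL].
    + rewrite HF. simpl. assert (1 <= 2 ^ k) by (apply Nat.neq_0_lt_0, Nat.pow_nonzero; lia).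
      assert (1 <= 2 ^ S) by (apply Nat.neq_0_lt_0, Nat.pow_nonzero; lia).
      assert (Ck p n k / 2 ^ S <= Ck p n k) by (apply Nat.Div0.div_le_upper_bound; nia). nia.
    + rewrite HL. unfold L. rewrite Nat.pow_add_r. nia.
Qed.

Lemma sumf_add m a b : sumf m (fun u => a u + b u) = sumf m a + sumf m b.
Proof. induction m; simpl; auto. rewrite IHm. lia. Qed.

Lemma sumf_double m h : sumf (2 * m) h = sumf m (fun u => h (2 * u) + h (2 * u + 1)).
Proof.
  induction m; [reflexivity|]. replace (2 * S m) with (S (S (2 * m))) by lia.
  cbn [sumf]. rewrite IHm. replace (S (2 * m)) with (2 * m + 1) by lia. lia.
Qed.

Lemma list_sum_app' l1 l2 : list_sum (l1 ++ l2) = list_sum l1 + list_sum l2.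
Proof. induction l1; simpl; auto. rewrite IHl1. lia. Qed.

Lemma sum_all_strings : forall L f,
  list_sum (map (fun t => f (code_str t)) (all_strings L)) = sumf (2 ^ L) (fun y => f (2 ^ L - 1 + y)).
Proof.
  induction L; intros f; [simpl; lia|].
  cbn [all_strings]. rewrite map_app, list_sum_app', !map_map. cbn [code_str].
  unfold bstring in IHL. rewrite (IHL (fun x => f (2 * x + 1))), (IHL (fun x => f (2 * x + 2))).
  rewrite Nat.pow_succ_r', sumf_double, <- sumf_add. apply sumf_ext. intros u Hu.
  assert (1 <= 2 ^ L) by (apply Nat.neq_0_lt_0, Nat.pow_nonzero; lia).
  f_equal; f_equal; lia.
Qed.

Lemma cntL_sum L P : cntL L P = list_sum (map (fun t => if P t then 1 else 0) (all_strings L)).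
Proof. unfold cntL. induction (all_strings L); simpl; auto. destruct (P a); simpl; lia. Qed.

Lemma exists_sum k (b : nat -> bool) : (1 <=? sumf k (fun i => if b i then 1 else 0)) = existsb b (seq 0 k).
Proof.
  induction k; [reflexivity|]. cbn [sumf]. rewrite seq_S, existsb_app. cbn [existsb].
  change (0 + k) with k. rewrite orb_false_r, <- IHk.
  generalize (sumf k (fun i => if b i then 1 else 0)). intro T.
  destruct T; destruct (b k); reflexivity.
Qed.

Lemma Ck_sum p n k : Ck p n k = sumf (2 ^ (Ssum p n k + k))
  (fun y => if 1 <=? sumf k (fun i => cfn (satc p) [i; n; 2 ^ (Ssum p n k + k) - 1 + y]) then 1 else 0).
Proof.
  unfold Ck. rewrite cntL_sum.
  rewrite <- (sum_all_strings _ (fun x => if 1 <=? sumf k (fun i => cfn (satc p) [i; n; x]) then 1 else 0)).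
  f_equal. apply map_ext. intros t.
  rewrite (sumf_ext k _ (fun i => if satb p n i t then 1 else 0)) by (intros; apply satc_code).
  rewrite exists_sum. reflexivity.
Qed.

Definition cSs (p : pieces) : cf.
Proof.
  refine (cext (cSum (ccomp (c_M p) [cP 1; cP 0]) (cP 1) [cP 0]) (fun a => Ssum p (a##0) (a##1)) _).
  intro a. cbn [cfn cext cSum ccomp map cP nth]. unfold Ssum. apply sumf_ext. intros. apply h_M.
Defined.

Definition cInner (p : pieces) : cf.
Proof.
  refine (cext (ccomp cLe [cK 1; cSum (ccomp (satc p) [cP 0; cP 2;
              ccomp cAdd [ccomp cSub [ccomp cPow2 [cP 4]; cK 1]; cP 1]]) (cP 2) [cP 0; cP 1; cP 2; cP 3]])
     (fun a => if 1 <=? sumf (a##2) (fun i => cfn (satc p) [i; a##1; 2 ^ (a##3) - 1 + a##0]) then 1 else 0) _).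
  intro a. reflexivity.
Defined.

Definition cG (p : pieces) : cf.
Proof.
  refine (cext (ccomp cAdd [ccomp cDiv [cSum (cInner p) (ccomp cPow2 [ccomp cAdd [cSs p; cP 1]])
                     [cP 0; cP 1; ccomp cAdd [cSs p; cP 1]]; ccomp cPow2 [cSs p]]; cK 1])
     (fun a => gfun p (a##0) (a##1)) _).
  intro a. unfold gfun. rewrite Ck_sum. cbn [cfn cext ccomp map cSum cP nth cAdd cDiv cPow2 cK cS cZ cInner cSs].
  rewrite divc_spec by (apply Nat.neq_0_lt_0, Nat.pow_nonzero; lia). reflexivity.
Defined.

Definition cH (p : pieces) : cf := ccomp cSub [cK 1; ccomp (satc p) [cP 0; cP 1; cP 2]].

Lemma least_nat (P : nat -> bool) n : P n = true ->
  exists m, P m = true /\ forall j, j < m -> P j = false.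
Proof.
  induction n as [n IH] using (well_founded_induction lt_wf). intros H.
  destruct (existsb P (seq 0 n)) eqn:E.
  - apply existsb_exists in E as [j [Hj Pj]]. apply in_seq in Hj. apply (IH j); auto. lia.
  - exists n; split; auto. intros j Hj. destruct (P j) eqn:Pj; auto.
    assert (existsb P (seq 0 n) = true) by (apply existsb_exists; exists j; split; auto; apply in_seq; lia).
    congruence.
Qed.

Lemma satc_01 p i n s : cfn (satc p) [i; n; code_str s] = 1 \/ cfn (satc p) [i; n; code_str s] = 0.
Proof. rewrite satc_code. destruct (satb p n i s); auto. Qed.

Lemma utest_ce p : unif_ce (Utest p).
Proof.
  exists (cMu (cc (cH p))). intros n s. split.
  - intros [i Hi]. destruct (least_nat (fun i => satb p n i s) i Hi) as [m [Hm Hlt]].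
    exists m. constructor.
    + pose proof (cok (cH p) (m :: [n; code_str s])) as E. cbn [cfn cH ccomp map cP nth cSub cK cS cZ cext] in E.
      rewrite satc_code, Hm in E. exact E.
    + intros j Hj. exists 0. pose proof (cok (cH p) (j :: [n; code_str s])) as E.
      cbn [cfn cH ccomp map cP nth cSub cK cS cZ cext] in E.
      rewrite satc_code, (Hlt j Hj) in E. exact E.
  - intros [y Hy]. inversion Hy as [| | | | | |f a m E L]; subst.
    pose proof (cok (cH p) (y :: [n; code_str s])) as E'.
    pose proof (eval_det _ _ _ _ E E') as Eq.
    cbn [cfn cH ccomp map cP nth cSub cK cS cZ cext] in Eq.
    rewrite satc_code in Eq. exists y. destruct (satb p n y s); auto. discriminate.
Qed.

Theorem pieces_test (p : pieces) : SchnorrTest (Utest p).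
Proof.
  split; [apply utest_ce|]. split; [apply mu_bound|].
  exists (gfun p). split.
  - exists (cc (cG p)). intros x y. apply (cok (cG p) [x; y]).
  - intros n k. split.
    + intros F HF. rewrite up_fr. apply upper_bound; auto.
    + destruct (lower_bound p n k) as [F [HF Hl]]. exists F. split; auto.
      rewrite lo_fr by (unfold gfun; lia). auto.
Qed.

Definition leastb (f : cf) (a : list nat) (m : nat) : bool :=
  (cfn f (m :: a) =? 0) && forallb (fun j => negb (cfn f (j :: a) =? 0)) (seq 0 m).

Lemma leastb_ex f a : (exists y, cfn f (y :: a) = 0) -> exists m, leastb f a m = true.
Proof.
  intros [y Hy]. destruct (least_nat (fun y => cfn f (y :: a) =? 0) y) as [m [Hm Hlt]].
  - apply Nat.eqb_eq; auto.
  - exists m. unfold leastb. rewrite Hm. simpl. apply forallb_forall. intros j Hj.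
    apply in_seq in Hj. rewrite Hlt by lia. reflexivity.
Qed.

Definition mufun (f : cf) (H : forall a, exists y, cfn f (y :: a) = 0) (a : list nat) : nat :=
  proj1_sig (constructive_indefinite_ground_description_nat (fun m => leastb f a m = true)
     (fun m => bool_dec (leastb f a m) true) (leastb_ex f a (H a))).

Lemma mufun_spec f H a : leastb f a (mufun f H a) = true.
Proof. unfold mufun. destruct constructive_indefinite_ground_description_nat; auto. Qed.

Definition cmu (f : cf) (H : forall a, exists y, cfn f (y :: a) = 0) : cf.
Proof.
  refine (mkcf (cMu (cc f)) (mufun f H) _). intro a.
  pose proof (mufun_spec f H a) as Hs. unfold leastb in Hs. apply andb_prop in Hs as [H1 H2].
  apply Nat.eqb_eq in H1. constructor.
  - rewrite <- H1. apply cok.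
  - intros j Hj. rewrite forallb_forall in H2. specialize (H2 j ltac:(apply in_seq; lia)).
    destruct (cfn f (j :: a)) eqn:E; [discriminate|]. exists n. rewrite <- E. apply cok.
Defined.

Lemma mufun_zero f H a : cfn f (mufun f H a :: a) = 0.
Proof.
  pose proof (mufun_spec f H a) as Hs. unfold leastb in Hs. apply andb_prop in Hs as [H1 _].
  apply Nat.eqb_eq; auto.
Qed.

Lemma sumf_ge m i : sumf m (fun j => if i <=? j then 1 else 0) = m - i.
Proof. induction m; [reflexivity|]. cbn [sumf]. rewrite IHm. destruct (Nat.leb_spec i m); lia. Qed.

Definition pinf : pieces.
Proof.
  refine (Build_pieces (fun _ _ => true) (fun n i => i + i + n + 1) (fun n i j => i <=? j) (fun _ _ _ => false)
    (cK 1) (ccomp cAdd [ccomp cAdd [ccomp cAdd [cP 1; cP 1]; cP 0]; cK 1]) (ccomp cLe [cP 1; cP 2]) cZ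
    _ _ _ _ _).
  - reflexivity.
  - reflexivity.
  - reflexivity.
  - reflexivity.
  - intros n i _. rewrite sumf_ge. lia.
Defined.

Lemma prefix_nth A M j : j < M -> nth j (prefix A M) false = A j.
Proof.
  intros H. unfold prefix. rewrite nth_indep with (d' := A 0) by (rewrite length_map, length_seq; auto).
  rewrite map_nth, seq_nth; auto.
Qed.

Lemma prefix_len A M : length (prefix A M) = M.
Proof. unfold prefix. rewrite length_map, length_seq. auto. Qed.

Lemma random_infinite A : SchnorrRandom A -> set_infinite A.
Proof.
  intros HR n0. apply NNPP. intros Hno.
  destruct (HR (Utest pinf) (pieces_test pinf)) as [n Hn].
  apply (Hn (n0 + n0 + n + 1)). exists n0.
  unfold satb. simpl actb. simpl Mfun. rewrite prefix_len, Nat.leb_refl. simpl.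
  apply forallb_forall. intros j Hj. apply in_seq in Hj.
  destruct (Nat.leb_spec n0 j); simpl; auto. rewrite prefix_nth by lia.
  destruct (A j) eqn:E; auto. exfalso. apply Hno. exists j. split; auto.
Qed.

Definition cf2 (c : code) (F : nat -> nat -> nat) (H : forall x y, eval c [x; y] (F x y)) : cf.
Proof.
  refine (mkcf (cComp c [cProj 0; cProj 1]) (fun a => F (a##0) (a##1)) _).
  intro a. econstructor; [|apply H]. repeat constructor.
Defined.

Definition cf1 (c : code) (F : nat -> nat) (H : forall x, eval c [x] (F x)) : cf.
Proof.
  refine (mkcf (cComp c [cProj 0]) (fun a => F (a##0)) _).
  intro a. econstructor; [|apply H]. repeat constructor.
Defined.

Lemma sumf_filter m (P : nat -> bool) : sumf m (fun x => if P x then 1 else 0) = length (filter P (seq 0 m)).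
Proof.
  induction m; [reflexivity|]. cbn [sumf]. rewrite seq_S, filter_app, length_app, IHm. simpl.
  destruct (P m); reflexivity.
Qed.

Lemma nodup_same_len (l l' : list nat) : NoDup l -> NoDup l' -> (forall x, In x l <-> In x l') ->
  length l = length l'.
Proof.
  intros H1 H2 H. apply Nat.le_antisymm; apply NoDup_incl_length; auto; intros x Hx; apply H; auto.
Qed.

Lemma ex_bound (l : list nat) : exists M, forall x, In x l -> x < M.
Proof.
  induction l as [|a l [M HM]]; [exists 0; intros x []|].
  exists (Nat.max (S a) M). intros x [<-|Hx]; [lia|]. specialize (HM x Hx). lia.
Qed.

Lemma immune_main A : SchnorrRandom A ->
  forall D, canonical_numbering D ->
      exists N, forall e, N <= e ->
        (forall x, D e x = true -> A x = true) ->
        forall l, NoDup l -> (forall x, D e x = true <-> In x l) ->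
          length l <= e.
Proof.
  intros HR D [[card [[ccard Hcard] Hlist]] [[cD HD] _]].
  set (cDf := cf2 cD (fun x y => if D x y then 1 else 0) HD).
  set (cCard := cf1 ccard card Hcard).
  set (Q := ccomp cIfz [ccomp cEq [cSum (ccomp cDf [cP 1; cP 0]) (cP 0) [cP 1]; ccomp cCard [cP 1]]; cK 1; cK 0]).
  assert (HQ : forall M e, cfn Q (M :: [e]) = if sumf M (fun x => if D e x then 1 else 0) =? card e then 0 else 1).
  { intros M e. simpl. destruct (sumf M (fun x => if D e x then 1 else 0) =? card e); reflexivity. }
  assert (Hex : forall a, exists y, cfn Q (y :: a) = 0).
  { intros a. destruct (Hlist (a##0)) as [l [Hnd [Hlen Hin]]].
    destruct (ex_bound l) as [M HM]. exists M.
    change (cfn Q (M :: a)) with (cfn Q (M :: [a##0])). rewrite HQ.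
    replace (sumf M (fun x => if D (a##0) x then 1 else 0)) with (card (a##0)); [rewrite Nat.eqb_refl; auto|].
    rewrite sumf_filter, <- Hlen. apply nodup_same_len; auto.
    - apply NoDup_filter, seq_NoDup.
    - intros x. rewrite filter_In, in_seq. split.
      + intros Hx. split; [specialize (HM x Hx); lia | apply Hin; auto].
      + intros [_ Hd]. apply Hin; auto. }
  set (cMe := cmu Q Hex).
  set (Me := fun e => cfn cMe [e]).
  assert (HMe : forall e, sumf (Me e) (fun x => if D e x then 1 else 0) = card e).
  { intros e. pose proof (mufun_zero Q Hex [e]) as Z. rewrite HQ in Z.
    destruct (Nat.eqb_spec (sumf (mufun Q Hex [e]) (fun x => if D e x then 1 else 0)) (card e)); auto.
    discriminate. }
  assert (Hc : forall n i, (S (n + i) <=? card (n + i)) = true ->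
      n + i + 1 <= sumf (Me (n + i)) (fun j => if D (n + i) j then 1 else 0)).
  { intros n i H. apply Nat.leb_le in H. rewrite HMe. lia. }
  pose (p2 := Build_pieces (fun n i => S (n + i) <=? card (n + i)) (fun n i => Me (n + i))
      (fun n i j => D (n + i) j) (fun _ _ _ => true)
      (ccomp cLe [ccomp cS [ccomp cAdd [cP 0; cP 1]]; ccomp cCard [ccomp cAdd [cP 0; cP 1]]])
      (ccomp cMe [ccomp cAdd [cP 0; cP 1]]) (ccomp cDf [ccomp cAdd [cP 0; cP 1]; cP 2]) (cK 1)
      (fun n i => eq_refl) (fun n i => eq_refl) (fun n i j => eq_refl) (fun n i j => eq_refl) Hc).
  destruct (HR (Utest p2) (pieces_test p2)) as [n Hn].
  apply NNPP. intros Hno.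
  assert (Hw : exists e l, n <= e /\ (forall x, D e x = true -> A x = true) /\ NoDup l /\
                 (forall x, D e x = true <-> In x l) /\ e < length l).
  { apply NNPP. intros H. apply Hno. exists n. intros e He Hsub l Hnd Hl.
    destruct (le_lt_dec (length l) e); auto. exfalso. apply H. exists e, l. auto. }
  destruct Hw as [e [l [He [Hsub [Hnd [Hl Hlt]]]]]].
  destruct (Hlist e) as [l' [Hnd' [Hlen' Hin']]].
  assert (Ec : card e = length l).
  { rewrite <- Hlen'. apply nodup_same_len; auto. intros x. rewrite <- Hl, <- Hin'. tauto. }
  apply (Hn (Me e)). exists (e - n).
  replace (n + (e - n)) with e by lia.
  unfold satb, p2. cbn [actb Mfun maskb valb].
  replace (n + (e - n)) with e by lia.
  assert (E1 : (S e <=? card e) = true) by (apply Nat.leb_le; lia). rewrite E1.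
  rewrite prefix_len, Nat.leb_refl. simpl.
  apply forallb_forall. intros j Hj. apply in_seq in Hj.
  destruct (D e j) eqn:Ed; simpl; auto. rewrite prefix_nth by lia. rewrite (Hsub j Ed). reflexivity.
Qed.

Theorem mainTheorem11 (A : nat -> bool) :
  SchnorrRandom A -> canonically_immune A.
Proof.
  intros HR. split.
  - apply random_infinite; auto.
  - exists (fun e => e). split.
    + exists (cProj 0). intros x. apply (ev_proj 0 [x]).
    + apply immune_main; auto.
Qed.
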